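(* Let $\mathbf v=(v_1,\dots,v_m)$ and $\mathbf k=(k_1,\dots,k_m)$ be $m$-tuples of positive integers with $k_i\le v_i$ for all $i$ and $\sum_i k_i\ge 2$. Then \[ C(\mathbf v,\mathbf k,2)\ \ge\ \max_{\substack{1\le i\le m\\ k_i\neq 1}} C(v_i,k_i,2). \]
   Context: Let $X_1,\dots,X_m$ be pairwise disjoint sets with $|X_i|=v_i$. A block is an $m$-tuple $(B_1,\dots,B_m)$ with $B_i\subseteq X_i$, $|B_i|=k_i$. An $m$-tuple of sets $(T_1,\dots,T_m)$ is $(\mathbf v,\mathbf k,2)$-admissible if $T_i\subseteq X_i$, $|T_i|\le k_i$ and $\sum|T_i|=2$; it is contained in a block if $T_i\subseteq B_i$ for all $i$. A ${\rm GC}(\mathbf v,\mathbf k,2)$ is a finite family (repetitions allowed) of blocks containing every admissible tuple in at least one block; $C(\mathbf v,\mathbf k,2)$ is the minimum number of blocks. For integers $v\ge k\ge 2$, $C(v,k,2)$ is the ordinary covering number: the minimum number of $k$-subsets of a $v$-set such that every $2$-subset is contained in at least one of them. *)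

(* Defs.v *)
From Stdlib Require Import ClassicalEpsilon.
From mathcomp Require Import all_boot.
Set Implicit Arguments. Unset Strict Implicit. Unset Printing Implicit Defensive.

(* Minimum of a set of naturals (chosen classically); meaningful when the set is nonempty. *)
Definition min_nat (P : nat -> Prop) : nat :=
  epsilon (inhabits 0) (fun n => P n /\ forall n', P n' -> n <= n').

(* Ground set X_i is modelled by 'I_(v i); the X_i are disjoint by construction
   (a tuple (T_1,...,T_m) has T_i a subset of 'I_(v i)). *)
Definition mtuple (m : nat) (v : 'I_m -> nat) : Type :=
  forall i : 'I_m, {set 'I_(v i)}.

Definition is_block m (v k : 'I_m -> nat) (B : mtuple v) : Prop :=
  forall i, #|B i| = k i.

Definition admissible2 m (v k : 'I_m -> nat) (T : mtuple v) : Prop :=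
  (forall i, #|T i| <= k i) /\ \sum_(i < m) #|T i| = 2.

Definition contained m (v : 'I_m -> nat) (T B : mtuple v) : Prop :=
  forall i, T i \subset B i.

(* A GC(v,k,2) with b blocks (a family indexed by 'I_b, repetitions allowed). *)
Definition is_GC m (v k : 'I_m -> nat) (b : nat) (F : 'I_b -> mtuple v) : Prop :=
  (forall j, is_block k (F j)) /\
  (forall T : mtuple v, admissible2 k T -> exists j, contained T (F j)).

Definition C_GC m (v k : 'I_m -> nat) : nat :=
  min_nat (fun b => exists F : 'I_b -> mtuple v, is_GC k F).

Definition is_covering (v k b : nat) (F : 'I_b -> {set 'I_v}) : Prop :=
  (forall j, #|F j| = k) /\
  (forall P : {set 'I_v}, #|P| = 2 -> exists j, P \subset F j).

Definition C_cov (v k : nat) : nat :=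
  min_nat (fun b => exists F : 'I_b -> {set 'I_v}, is_covering k F).

(* Main.v *)
Require Import Defs.
From mathcomp Require Import all_boot.
From Stdlib Require Import ClassicalEpsilon.

Lemma min_natP (P : nat -> Prop) n : P n ->
  P (min_nat P) /\ forall n', P n' -> min_nat P <= n'.
Proof.
move=> Pn; rewrite /min_nat; apply: (epsilon_spec (inhabits 0) (fun n => P n /\ forall n', P n' -> n <= n')).
pose pb := fun n => if excluded_middle_informative (P n) then true else false.
have ex : exists n, pb n.
  by exists n; rewrite /pb; case: excluded_middle_informative.
case: (ex_minnP ex) => x Hx Hmin; exists x; split.
  by move: Hx; rewrite /pb; case: excluded_middle_informative.
move=> n' Pn'; apply: Hmin; rewrite /pb; by case: excluded_middle_informative.
Qed.

Lemma extend_set (v k : nat) (A : {set 'I_v}) : #|A| <= k -> k <= v ->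
  exists S : {set 'I_v}, A \subset S /\ #|S| = k.
Proof.
move=> hA hk; move Ed: (k - #|A|) => d; elim: d A hA Ed => [|d IH] A hA Ed.
  by exists A; split => //; apply/eqP; rewrite eqn_leq hA -subn_eq0 Ed.
have hlt : #|A| < v by apply: leq_trans hk; rewrite -subn_gt0 Ed.
have : 0 < #|~: A| by rewrite cardsCs setCK card_ord subn_gt0.
case/card_gt0P => x; rewrite in_setC => xA.
have h1 : #|x |: A| <= k by rewrite cardsU1 xA add1n -subn_gt0 Ed.
have h2 : k - #|x |: A| = d by rewrite cardsU1 xA add1n subnS Ed.
have [S [sub cS]] := IH (x |: A) h1 h2.
exists S; split => //; apply: subset_trans sub; exact: subsetUr.
Qed.

Definition blk v (k : nat) (A : {set 'I_v}) : {set 'I_v} :=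
  if [pick X : {set 'I_v} | (A \subset X) && (#|X| == k)] is Some X then X else
  if [pick X : {set 'I_v} | #|X| == k] is Some X then X else set0.

Arguments blk {v}.

Lemma blk_card v k (A : {set 'I_v}) : k <= v -> #|blk k A| = k.
Proof.
move=> hk; rewrite /blk; case: pickP => [X /andP[_ /eqP] //|_].
case: pickP => [X /eqP //|H].
have [X [_ cS]] := @extend_set v k set0 ltac:(by rewrite cards0) hk.
by move: (H X); rewrite cS eqxx.
Qed.

Lemma blk_sub v k (A : {set 'I_v}) : #|A| <= k -> k <= v -> A \subset blk k A.
Proof.
move=> hA hk; rewrite /blk; case: pickP => [X /andP[] //|H].
have [X [sS cS]] := @extend_set v k A hA hk.
by move: (H X); rewrite sS cS eqxx.
Qed.

Theorem corollary3p10 (m : nat) (v k : 'I_m -> nat)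
  (hv : forall i, 0 < v i) (hk : forall i, 0 < k i)
  (hkv : forall i, k i <= v i) (hsum : 2 <= \sum_(i < m) k i) :
  \max_(i < m | k i != 1) C_cov (v i) (k i) <= C_GC v k.
Proof.
pose DT := {dffun forall i : 'I_m, {set 'I_(v i)}}.
have GC : exists F : 'I_#|{: DT}| -> mtuple v, is_GC k F.
  exists (fun j i => blk (k i) ((enum_val j : DT) i)); split.
    by move=> j i; apply: blk_card.
  move=> T [hT _]; exists (enum_rank ([ffun i => T i] : DT)) => i.
  by rewrite enum_rankK ffunE; apply: blk_sub.
have [[F [FB FC]] _] := @min_natP (fun b => exists F : 'I_b -> mtuple v, is_GC k F) _ GC.
rewrite /C_GC; set b := min_nat _ in F FB FC *.
apply/bigmax_leqP => i ki1.
have ki2 : 2 <= k i by move: (hk i) ki1; case: (k i) => [|[|]].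
have cov : exists G : 'I_b -> {set 'I_(v i)}, is_covering (k i) G.
  exists (fun j => F j i); split; first by move=> j; apply: FB.
  move=> P cP.
  pose T : mtuple v := fun i' =>
    [set y : 'I_(v i') | (i' == i) && (val y \in [seq val z | z in P])].
  have Ti : T i = P.
    apply/setP => y; rewrite inE eqxx /=.
    apply/mapP/idP => [[z zP /val_inj ->]|yP]; first by rewrite mem_enum in zP.
    by exists y; rewrite ?mem_enum.
  have T0 : forall i', i' != i -> T i' = set0.
    by move=> i' ne; apply/setP => y; rewrite !inE (negbTE ne).
  have [j Hj] : exists j, contained T (F j).
    apply: FC; split.
      move=> i'; case: (eqVneq i' i) => [->|ne]; first by rewrite Ti cP.
      by rewrite T0 // cards0.
    rewrite (bigD1 i) //= Ti cP big1 ?addn0 // => i' ne.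
    by rewrite T0 // cards0.
  by exists j; rewrite -Ti; apply: Hj.
exact: ((@min_natP (fun b => exists G : 'I_b -> {set 'I_(v i)}, is_covering (k i) G) _ cov).2 b cov).
Qed.
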